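(* Consider the corrupted Lipschitz contextual search problem with pricing loss described in the context, and let the learner run Algorithm 3 (described in the context) with discretization parameter $\eta_0=T^{-1/(d+1)}$ and agnostic-check schedule $\tau_0\ge 1$. Then for any unknown corruption budget $C$ (and every $L$-Lipschitz $f$, context sequence and adaptive corruption strategy with at most $C$ corrupted rounds), the total pricing loss is at most \[ L\cdot O\big(C\log T + T^{d/(d+1)}\log T + C\tau_0 + T/\tau_0\big). \] In particular, with $\tau_0=T^{1/(d+1)}$, the total pricing loss is at most $L\cdot \widetilde{O}\big(T^{d/(d+1)} + C\cdot T^{1/(d+1)}\big)$, where $\widetilde O$ hides logarithmic factors in $T$.
   Context: Problem. Fix $L>0$, $d\ge 1$, horizon $T\ge 2$. An adversary fixes an unknown $f:[0,1]^d\to[0,L]$ with $|f(x)-f(y)|\le L\|x-y\|_\infty$. In each round $t=1,\dots,T$: the adversary chooses $x_t\in[0,1]^d$; the learner observes $x_t$ and posts a guess (price) $q_t$; the adversary observes $q_t$ and sends $\sigma_t\in\{0,1\}$. With $\sigma(u)=1$ if $u>0$, $0$ if $u\le 0$: in uncorrupted rounds $\sigma_t=\sigma(q_t-f(x_t))$, in corrupted rounds $\sigma_t=1-\sigma(q_t-f(x_t))$; the adversary chooses adaptively (after seeing $q_t$) which rounds to corrupt, with at most $C$ corrupted rounds, $C$ unknown to the learner. The (unobserved) pricing loss of round $t$ is $\ell(q_t,f(x_t))=f(x_t)-q_t\cdot\mathbb{1}[q_t\le f(x_t)]$. $\mathtt{len}$ denotes length of an interval and side length of a hypercube. Subroutine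 $\mathtt{MidpointQuery}(I,Y)$, $Y=[a,b]$: guess $q=(a+b)/2$; if $\sigma_t=1$ return $Y\cap[0,q+L\,\mathtt{len}(I)]$, if $\sigma_t=0$ return $Y\cap[q-L\,\mathtt{len}(I),\infty)$. Algorithm 3. The learner uniformly partitions $[0,1]^d$ into hypercubes of side length $\Theta(\eta_0)$. Each hypercube $I_j$ has an associated range $Y_j$ (initially $[0,L]$) and a counter $c_j$ (initially $0$). In round $t$, let $I_j$ be the hypercube containing $x_t$. If $\mathtt{len}(Y_j)<10L\eta_0$ ($I_j$ is ''pricing-ready''): set $c_j:=c_j+1$; if $c_j>\tau_0$, guess $\max(Y_j)$ (a ''checking round'') and set $c_j:=0$; otherwise guess $\min(Y_j)$ (a ''pricing round''). The learner is ''surprised'' if in a checking round it receives $\sigma_t=0$ or in a pricing round it receives $\sigma_t=1$; when surprised it sets $Y_j:=[0,L]$ and $c_j:=0$. If $I_j$ is not pricing-ready, it performs a ''searching round'' $Y_j:=\mathtt{MidpointQuery}(I_j,Y_j)$. *)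

(* Defs.v *)
From HB Require Import structures.
From mathcomp Require Import all_boot all_order all_algebra.
From mathcomp Require Import reals exp.
Set Implicit Arguments. Unset Strict Implicit. Unset Printing Implicit Defensive.
Import Order.TTheory GRing.Theory Num.Theory.
Local Open Scope ring_scope.

Definition incube (R : realType) (d : nat) (x : 'I_d -> R) : Prop :=
  forall i, 0 <= x i <= 1.

Definition linf (R : realType) (d : nat) (x y : 'I_d -> R) : R :=
  \big[Num.max/0]_(i < d) `|x i - y i|.

Definition valid_f (R : realType) (d : nat) (L : R) (f : ('I_d -> R) -> R) : Prop :=
  (forall x, incube x -> 0 <= f x <= L) /\
  (forall x y, incube x -> incube y -> `|f x - f y| <= L * linf x y).

Definition sigma (R : realType) (u : R) : bool := 0 < u.

Definition pricing_loss (R : realType) (q v : R) : R :=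
  v - q * (if q <= v then 1 else 0).

Definition eta0 (R : realType) (d T : nat) : R :=
  (T%:R : R) `^ (- ((d.+1)%:R)^-1).

(** Number of cells per axis: N = floor(1/eta0) = floor(T^(1/(d+1))) (>= 1 for T >= 2),
    so that the cubes have side length 1/N in [eta0, 2 eta0) = Theta(eta0). *)
Definition ncells (R : realType) (d T : nat) : nat :=
  Num.truncn ((T%:R : R) `^ ((d.+1)%:R^-1)).

(** The index (as a list of d coordinates in {0,..,N-1}) of the hypercube
    [k_1/N,(k_1+1)/N) x ... containing x (the last cube along each axis is closed). *)
Definition cell_of (R : realType) (d N : nat) (x : 'I_d -> R) : seq nat :=
  [seq minn N.-1 (Num.truncn (x i * N%:R)) | i <- enum 'I_d].

(** Per-cube learner state: range Y_j = [a, b] and counter c_j. *)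
Definition cell_state (R : realType) : Type := (R * R * nat)%type.
Definition lstate (R : realType) : Type := seq nat -> cell_state R.

Definition init_cell (R : realType) (L : R) : cell_state R := (0, L, 0%N).
Definition init_state (R : realType) (L : R) : lstate R := fun _ => init_cell L.

Record alg_params (R : realType) := AlgParams {
  ap_L : R;
  ap_eta : R;
  ap_N : nat;    (* number of cubes per axis *)
  ap_tau : R
}.

Definition side (R : realType) (N : nat) : R := (N%:R)^-1.

Definition ready (R : realType) (P : alg_params R) (a b : R) : bool :=
  b - a < 10 * ap_L P * ap_eta P.

Definition alg_price (R : realType) (d : nat) (P : alg_params R) (S : lstate R)
    (x : 'I_d -> R) : R :=
  let: (a, b, c) := S (cell_of (ap_N P) x) in
  if ready P a b then
    (if ap_tau P < (c.+1)%:R then b  (* checking round: guess max Y_j *)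
     else a)                          (* pricing round: guess min Y_j *)
  else (a + b) / 2.                   (* searching round: MidpointQuery *)

Definition alg_update_cell (R : realType) (P : alg_params R) (cs : cell_state R)
    (sig : bool) : cell_state R :=
  let: (a, b, c) := cs in
  let L := ap_L P in
  if ready P a b then
    (if ap_tau P < (c.+1)%:R then
       (* checking round: c_j := 0; surprised iff sig = 0 *)
       (if sig then (a, b, 0%N) else init_cell L)
     else
       (* pricing round: c_j := c_j + 1; surprised iff sig = 1 *)
       (if sig then init_cell L else (a, b, c.+1)))
  else
    (* searching round: Y_j := MidpointQuery(I_j, Y_j) *)
    let q := (a + b) / 2 in
    let s := side R (ap_N P) in
    if sig then (Num.max a 0, Num.min b (q + L * s), c)
    else (Num.max a (q - L * s), b, c).

Definition alg_update (R : realType) (d : nat) (P : alg_params R) (S : lstate R)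
    (x : 'I_d -> R) (sig : bool) : lstate R :=
  let j := cell_of (ap_N P) x in
  fun k => if k == j then alg_update_cell P (S j) sig else S k.

Definition hist (R : realType) (d : nat) : Type := ((('I_d -> R) * R) * bool)%type.

(** Adaptive adversary: chooses x_t from the history, and (after seeing q_t)
    whether to corrupt round t. *)
Record adversary (R : realType) (d : nat) := Adversary {
  adv_x : seq (hist R d) -> 'I_d -> R;
  adv_corrupt : seq (hist R d) -> ('I_d -> R) -> R -> bool
}.

Record game_rec (R : realType) (d : nat) := GameRec {
  g_state : lstate R;
  g_hist : seq (hist R d);
  g_loss : R;
  g_ncorr : nat
}.

Fixpoint run (R : realType) (d : nat) (P : alg_params R) (f : ('I_d -> R) -> R)
    (A : adversary R d) (t : nat) : game_rec R d :=
  match t with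
  | 0%N => GameRec (init_state (ap_L P)) [::] 0 0%N
  | t'.+1 =>
    let g := run P f A t' in
    let x := adv_x A (g_hist g) in
    let q := alg_price P (g_state g) x in
    let corr := adv_corrupt A (g_hist g) x q in
    let sig := if corr then ~~ sigma (q - f x) else sigma (q - f x) in
    GameRec (alg_update P (g_state g) x sig)
            (rcons (g_hist g) (x, q, sig))
            (g_loss g + pricing_loss q (f x))
            (g_ncorr g + corr)
  end.

Definition alg3 (R : realType) (d T : nat) (L tau0 : R) : alg_params R :=
  AlgParams L (eta0 R d T) (ncells R d T) tau0.

(* Main.v *)
Require Import Defs.
From HB Require Import structures.
From mathcomp Require Import all_boot all_order all_algebra.
From mathcomp Require Import reals exp.
From mathcomp Require Import boolp ring lra zify.
Import Order.TTheory GRing.Theory Num.Theory.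
Local Open Scope ring_scope.

Section Analysis.
Variables (R : realType) (d : nat) (L eta tau0 : R) (N : nat) (f : ('I_d -> R) -> R).
Hypotheses (L_gt0 : 0 < L) (eta_gt0 : 0 < eta) (N_gt0 : (0 < N)%N)
  (s_le : side R N <= 2 * eta) (tau0_ge1 : 1 <= tau0) (fvalid : valid_f L f).

Let P := AlgParams L eta N tau0.
Let s := side R N.
Let u := L * s.

Lemma s_gt0 : 0 < s.
Proof. by rewrite /s /side invr_gt0 ltr0n. Qed.

Lemma s_le1 : s <= 1.
Proof. by rewrite /s /side invf_le1 ?ler1n ?ltr0n. Qed.

Lemma u_gt0 : 0 < u.
Proof. by rewrite /u mulr_gt0 // s_gt0. Qed.

Lemma u_le : u <= 2 * (L * eta).
Proof. rewrite /u mulrCA ler_pM2l //. Qed.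

Definition cellP (k : seq nat) (y : 'I_d -> R) := incube y /\ cell_of N y = k.

Lemma coord_bound (x : 'I_d -> R) i : 0 <= x i <= 1 ->
  let m := minn N.-1 (Num.truncn (x i * N%:R)) in
  (m%:R <= x i * N%:R) /\ (x i * N%:R <= m%:R + 1).
Proof.
move=> /andP[x0 x1] m.
have xN0 : 0 <= x i * N%:R by rewrite mulr_ge0.
have [hle|hgt] := leqP (Num.truncn (x i * N%:R)) N.-1.
- rewrite /m (minn_idPr hle).
  have /andP[h1 h2] := truncn_itv xN0.
  split => //. rewrite -natr1 in h2. lra.
- rewrite /m (minn_idPl (ltnW hgt)).
  have h1 : (N.-1.+1 <= Num.truncn (x i * N%:R))%N by [].
  rewrite prednK // in h1.
  have : (N%:R <= x i * N%:R) by rewrite -truncn_ge_nat.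
  have : x i * N%:R <= N%:R by rewrite ler_piMl.
  have hN : (N.-1)%:R + 1 = N%:R :> R by rewrite natr1 prednK.
  lra.
Qed.

Lemma cell_coord (x y : 'I_d -> R) i : incube x -> incube y -> cell_of N x = cell_of N y ->
  `|x i - y i| <= s.
Proof.
move=> hx hy e.
have e' : minn N.-1 (Num.truncn (x i * N%:R)) = minn N.-1 (Num.truncn (y i * N%:R)).
  have := congr1 (fun q => nth 0%N q i) e.
  by rewrite /cell_of !(nth_map i) -?enumT ?size_enum_ord // nth_ord_enum.
have [hx1 hx2] := @coord_bound x i (hx i).
have [hy1 hy2] := @coord_bound y i (hy i).
rewrite e' in hx1 hx2.
set m := (minn _ _)%:R in hx1 hx2 hy1 hy2.
have Np : 0 < N%:R :> R by rewrite ltr0n.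
have h : `|x i * N%:R - y i * N%:R| <= 1.
  rewrite ler_norml; apply/andP; split; lra.
rewrite -mulrBl normrM (gtr0_norm Np) in h.
by rewrite /s /side -div1r ler_pdivlMr.
Qed.

Lemma cell_linf (k : seq nat) x y : cellP k x -> cellP k y -> linf x y <= s.
Proof.
move=> [hx ex] [hy ey].
rewrite /linf; apply: (big_ind (fun v => v <= s)).
- exact: ltW s_gt0.
- by move=> a b ha hb; rewrite ge_max ha hb.
- by move=> i _; apply: cell_coord => //; rewrite ex ey.
Qed.

Lemma cell_lip (k : seq nat) x y : cellP k x -> cellP k y -> `|f x - f y| <= u.
Proof.
move=> hx hy.
apply: le_trans (proj2 fvalid x y hx.1 hy.1) _.
by rewrite /u ler_pM2l // (@cell_linf k x y hx hy).
Qed.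

Lemma f_range y : incube y -> 0 <= f y <= L.
Proof. exact: (proj1 fvalid). Qed.

Definition G (len : R) := ln (Num.max (len - 2 * u) u / u) / ln 2.

Lemma ln2_gt0 : 0 < ln (2 : R).
Proof. by apply: ln_gt0; lra. Qed.

Lemma maxu_ge x : u <= Num.max (x - 2 * u) u.
Proof. by rewrite le_max lexx orbT. Qed.

Lemma G_ge0 len : 0 <= G len.
Proof.
rewrite /G divr_ge0 ?(ltW ln2_gt0) // ln_ge0 //.
by rewrite ler_pdivlMr ?u_gt0 // mul1r maxu_ge.
Qed.

Lemma G_mono x y : x <= y -> G x <= G y.
Proof.
move=> hxy; rewrite /G ler_pM2r ?invr_gt0 ?ln2_gt0 //.
have hu := u_gt0.
have p1 : 0 < Num.max (x - 2 * u) u / u by rewrite divr_gt0 //; apply: lt_le_trans (maxu_ge _).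
have p2 : 0 < Num.max (y - 2 * u) u / u by rewrite divr_gt0 //; apply: lt_le_trans (maxu_ge _).
rewrite ler_ln ?posrE // ler_pM2r ?invr_gt0 //.
rewrite ge_max !le_max lexx !orbT andbT; apply/orP; left; lra.
Qed.

Lemma G_step len len' : 10 * (L * eta) <= len -> len' <= len / 2 + u ->
  G len' + 1 <= G len.
Proof.
move=> h1 h2.
have hu := u_gt0. have hu2 := u_le.
have l2 := ln2_gt0.
have em : Num.max (len - 2 * u) u = len - 2 * u by rewrite max_l //; lra.
have hm' : Num.max (len' - 2 * u) u <= (len - 2 * u) / 2 by rewrite ge_max; apply/andP; split; lra.
have mpos : 0 < (len - 2 * u) / 2 / u by rewrite divr_gt0 //; lra.
have : ln (Num.max (len' - 2 * u) u / u) <= ln ((len - 2 * u) / 2 / u).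
  have p1 : 0 < Num.max (len' - 2 * u) u / u by rewrite divr_gt0 //; apply: lt_le_trans (maxu_ge _).
  by rewrite ler_ln ?posrE // ler_pM2r ?invr_gt0.
have -> : (len - 2 * u) / 2 / u = ((len - 2 * u) / u) / 2 by rewrite mulrAC.
rewrite ln_div ?posrE //; last by rewrite divr_gt0 //; lra.
rewrite /G em => h.
set A := ln (Num.max (len' - 2 * u) u / u) in h *.
set B := ln ((len - 2 * u) / u) in h *.
have h1' : 1 <= (B - A) / ln 2 by rewrite ler_pdivlMr // mul1r; lra.
rewrite mulrBl in h1'; lra.
Qed.

Lemma G_L : G L <= ln (N%:R) / ln 2.
Proof.
have hu := u_gt0. have l2 := ln2_gt0.
rewrite /G ler_pM2r ?invr_gt0 //.
have Np : 0 < N%:R :> R by rewrite ltr0n.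
have hs1 := s_le1.
have hLu : u <= L by rewrite /u ler_piMr // ltW.
rewrite ler_ln ?posrE //; last by rewrite divr_gt0 //; apply: lt_le_trans (maxu_ge _).
have -> : N%:R = L / u :> R.
  by rewrite /u /s /side invfM invrK mulrA divff ?mul1r // gt_eqF.
rewrite ler_pM2r ?invr_gt0 // ge_max; apply/andP; split => //; lra.
Qed.

Ltac pre := move: (L_gt0) (eta_gt0) (tau0_ge1) (u_gt0) (u_le) => ? ? ? ? ?.

Definition lowOK k a := forall y, cellP k y -> a <= f y.
Definition strictH k b := forall y, cellP k y -> f y < b.
Definition highOK k b := forall y, cellP k y -> f y < b + u.
Definition caseA k := forall y, cellP k y -> L - u <= f y.
Definition I := L * (G L + 3).
Definition Base k a b :=
  if `[< caseA k >] && (b == L) then 2 * (L - a) else L * (G (b - a) + 1).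
Definition Bad k a b (c : nat) :=
  (if `[< lowOK k a >] then 0 else L + I)
  + (if `[< highOK k b >] then 0 else L * (tau0 - c%:R) + L + I)
  + (if `[< caseA k >] || `[< strictH k b >] then 0 else L + I).
Definition Psi k (cs : cell_state R) := let: (a, b, c) := cs in
  (if ready P a b then 3 * c%:R * (L / tau0) else Base k a b) + Bad k a b c.
Definition inv (cs : cell_state R) := let: (a, b, c) := cs in
  [/\ 0 <= a <= L, 0 <= b <= L, c%:R <= tau0 & (~~ ready P a b -> c = 0%N)].
Definition price (cs : cell_state R) := let: (a, b, c) := cs in
  if ready P a b then (if tau0 < c.+1%:R then b else a) else (a + b) / 2.
Definition beta := 12 * (L * eta) + 3 * (L / tau0).
Definition betac := 7 * L + 4 * I + L * tau0.

Lemma readyE a b : ready P a b = (b - a < 10 * (L * eta)).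
Proof. by rewrite /ready /= mulrA. Qed.

Lemma I_ge : [/\ 0 <= I, 2 * L <= I & L * (G L + 1) <= I].
Proof.
have hG := G_ge0 L.
rewrite /I; split.
- by rewrite mulr_ge0 // ?ltW //; lra.
- by rewrite mulrC ler_pM2l //; lra.
- by rewrite ler_pM2l //; lra.
Qed.

Lemma r_ge0 : 0 <= L / tau0.
Proof. apply: divr_ge0; [exact: ltW | exact: le_trans ler01 tau0_ge1]. Qed.

Lemma taur : tau0 * (L / tau0) = L.
Proof. by rewrite mulrCA divff ?mulr1 // gt_eqF // (lt_le_trans ltr01 tau0_ge1). Qed.

Lemma Bad_ge0 k a b (c : nat) : c%:R <= tau0 -> 0 <= Bad k a b c.
Proof.
pre.
move=> hc; have [I0 _ _] := I_ge.
have : 0 <= L * (tau0 - c%:R) by apply: mulr_ge0; [exact: ltW | rewrite subr_ge0].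
rewrite /Bad; case: ifP; case: ifP; case: ifP => _ _ _; lra.
Qed.

Lemma Bad_le k a b (c : nat) : Bad k a b c <= 3 * (L + I) + L * tau0.
Proof.
pre.
have [I0 _ _] := I_ge.
have : L * (tau0 - c%:R) <= L * tau0 by rewrite ler_pM2l // lerBlDr lerDl.
have : 0 <= L * tau0 by apply: mulr_ge0; lra.
rewrite /Bad; case: ifP; case: ifP; case: ifP => _ _ _; lra.
Qed.

Lemma Psi_ge0 k cs : inv cs -> 0 <= Psi k cs.
Proof.
pre.
case: cs => [[a b] c] [/andP[a0 aL] /andP[b0 bL] hc _]; rewrite /Psi.
apply: addr_ge0; last exact: Bad_ge0.
case: ifP => _; first by rewrite mulr_ge0 ?r_ge0 // mulr_ge0.
rewrite /Base; case: ifP => _; first lra.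
apply: mulr_ge0; first exact: ltW.
by apply: addr_ge0; [exact: G_ge0|].
Qed.

Lemma Psi_le k cs : inv cs -> Psi k cs <= 6 * L + 4 * I + L * tau0.
Proof.
pre.
case: cs => [[a b] c] [/andP[a0 aL] /andP[b0 bL] hc _]; rewrite /Psi.
have hB := Bad_le k a b c.
have [I0 I2 I1] := I_ge.
suff : (if ready P a b then 3 * c%:R * (L / tau0) else Base k a b) <= 3 * L + I by lra.
case: ifP => _.
  have : c%:R * (L / tau0) <= tau0 * (L / tau0) by apply: ler_wpM2r; [exact: r_ge0|].
  rewrite taur => h.
  suff : 3 * c%:R * (L / tau0) <= 3 * L by lra.
  by rewrite -mulrA ler_pM2l //.
rewrite /Base; case: ifP => _; first lra.
have : G (b - a) <= G L by apply: G_mono; lra.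
have : L * (G (b - a) + 1) <= L * (G L + 1) by rewrite ler_pM2l // lerD2r G_mono //; lra.
lra.
Qed.

Lemma Le_gt0 : 0 < L * eta.
Proof. exact: mulr_gt0. Qed.

Lemma lip_in k x y : cellP k x -> cellP k y -> f y <= f x + u /\ f x - u <= f y.
Proof.
move=> hx hy; have := @cell_lip k x y hx hy; rewrite ler_norml => /andP[h1 h2].
split; lra.
Qed.

Lemma strict_or_A k : caseA k \/ strictH k L.
Proof.
pre.
case: (pselect (strictH k L)) => h; [by right | left].
move=> y hy; case: (lerP (L - u) (f y)) => // hlt.
exfalso; apply: h => y' hy'.
have [h1 _] := @lip_in k y y' hy hy'. lra.
Qed.

Lemma Bad_init k : Bad k 0 L 0 = 0.
Proof.
pre.
have hlow : lowOK k 0 by move=> y [hy _]; have /andP[] := f_range _ hy.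
have hhigh : highOK k L by move=> y [hy _]; have /andP[_ h] := f_range _ hy; lra.
rewrite /Bad (asboolT hlow) (asboolT hhigh).
case: (strict_or_A k) => h; first by rewrite (asboolT h) /=; lra.
by rewrite (asboolT h) orbT; lra.
Qed.

Lemma Psi_init k : Psi k (init_cell L) <= I /\ (caseA k -> Psi k (init_cell L) <= 2 * L).
Proof.
pre.
have [I0 I2 I1] := I_ge.
rewrite /Psi /init_cell Bad_init addr0.
case: ifP => _.
  rewrite mulr0n mulr0 mul0r; split => //; lra.
rewrite /Base eqxx andbT.
split; last by move=> h; rewrite (asboolT h); lra.
case: ifP => _; rewrite ?subr0; lra.
Qed.

Lemma inv_init : inv (init_cell L).
Proof.
pre. rewrite /inv /init_cell; split => //.
- apply/andP; split; lra.
- apply/andP; split; lra.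
- lra.
Qed.

Lemma loss_lt (q v : R) : v < q -> pricing_loss q v = v.
Proof. by move=> h; rewrite /pricing_loss leNgt h /= mulr0 subr0. Qed.

Lemma loss_ge (q v : R) : q <= v -> pricing_loss q v = v - q.
Proof. by move=> h; rewrite /pricing_loss h mulr1. Qed.

Lemma loss_le (q v : R) : 0 <= q -> v <= L -> pricing_loss q v <= L.
Proof.
move=> h1 h2; case: (lerP q v) => h.
  by rewrite loss_ge //; lra.
by rewrite loss_lt.
Qed.

Lemma price_ge0 cs : inv cs -> 0 <= price cs.
Proof.
case: cs => [[a b] c] [/andP[a0 aL] /andP[b0 bL] hc _]; rewrite /price.
case: ifP => _; first by case: ifP.
lra.
Qed.

Lemma inv_step cs sig : inv cs -> inv (alg_update_cell P cs sig).
Proof.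
pre.
case: cs => [[a b] c] [/andP[a0 aL] /andP[b0 bL] hc hc0].
rewrite /alg_update_cell /=.
case hr: (ready P a b).
  case: ifP => hchk; case: sig => /=.
  - split => //; try (apply/andP; split => //); lra.
  - split => //; try (apply/andP; split => //); lra.
  - split => //; try (apply/andP; split => //); lra.
  - split => //; try (apply/andP; split => //).
      by rewrite leNgt hchk.
    by rewrite hr.
have c0 := hc0 (negbT hr); subst c.
rewrite -/s -/u.
case: sig => /=; split => //; try lra.
- by rewrite max_l //; apply/andP; split.
- apply/andP; split.
    by rewrite le_min b0 /=; lra.
  by rewrite ge_min bL.
- apply/andP; split.
    by rewrite le_max a0.
  by rewrite ge_max aL /=; lra.
Qed.

Lemma Bad_mono k a b a' b' (c : nat) : c%:R <= tau0 ->
  (lowOK k a -> lowOK k a') -> (highOK k b -> highOK k b') ->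
  (strictH k b -> strictH k b') -> Bad k a' b' c <= Bad k a b c.
Proof.
pre => hc h1 h2 h3.
have [I0 _ _] := I_ge.
have hc' : 0 <= L * (tau0 - c%:R) by apply: mulr_ge0; [exact: ltW | rewrite subr_ge0].
rewrite /Bad.
have t1 : (if `[< lowOK k a' >] then 0 else L + I) <= (if `[< lowOK k a >] then 0 else L + I).
  case: (asboolP (lowOK k a)) => h; first by rewrite asboolT //; apply: h1.
  by case: ifP => _; lra.
have t2 : (if `[< highOK k b' >] then 0 else L * (tau0 - c%:R) + L + I)
    <= (if `[< highOK k b >] then 0 else L * (tau0 - c%:R) + L + I).
  case: (asboolP (highOK k b)) => h; first by rewrite asboolT //; apply: h2.
  by case: ifP => _; lra.
have t3 : (if `[< caseA k >] || `[< strictH k b' >] then 0 else L + I)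
    <= (if `[< caseA k >] || `[< strictH k b >] then 0 else L + I).
  case: (asboolP (caseA k)) => //= h.
  case: (asboolP (strictH k b)) => h'; first by rewrite asboolT //; apply: h3.
  by case: ifP => _; lra.
lra.
Qed.

Lemma Bad_ge_low k a b (c : nat) : c%:R <= tau0 -> ~ lowOK k a -> L + I <= Bad k a b c.
Proof.
pre => hc h.
have [I0 _ _] := I_ge.
have hc' : 0 <= L * (tau0 - c%:R) by apply: mulr_ge0; [exact: ltW | rewrite subr_ge0].
rewrite /Bad (asboolF h).
case: ifP => _; case: ifP => _; lra.
Qed.

Lemma Bad_ge_strict k a b (c : nat) : c%:R <= tau0 -> ~ caseA k -> ~ strictH k b ->
  L + I <= Bad k a b c.
Proof.
pre => hc h h'.
have [I0 _ _] := I_ge.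
have hc' : 0 <= L * (tau0 - c%:R) by apply: mulr_ge0; [exact: ltW | rewrite subr_ge0].
rewrite /Bad (asboolF h) (asboolF h') /=.
case: ifP => _; case: ifP => _; lra.
Qed.

Lemma step_unc k x cs : inv cs -> cellP k x ->
  pricing_loss (price cs) (f x)
  + Psi k (alg_update_cell P cs (sigma (price cs - f x))) <= Psi k cs + beta.
Proof.
pre => hinv hx.
have Le := Le_gt0.
have r0 := r_ge0.
have [I0 I2 I1] := I_ge.
have hx' := hx.
case: hx' => hxc _.
have /andP[v0 vL] := f_range _ hxc.
move: hinv; case: cs => [[a b] c] [/andP[a0 aL] /andP[b0 bL] hc hc0].
have cr0 : 0 <= c%:R * (L / tau0) by apply: mulr_ge0.
rewrite /price /alg_update_cell /Psi /sigma /beta.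
have lip y : cellP k y -> f y <= f x + u /\ f x - u <= f y by move=> hy; exact: (@lip_in k x y hx hy).
case hr: (ready P a b).
-
  case hchk: (tau0 < c.+1%:R).
  +
    have hcr : L < c%:R * (L / tau0) + L / tau0.
      have : tau0 * (L / tau0) < c.+1%:R * (L / tau0).
        rewrite ltr_pM2r //; rewrite divr_gt0 //; lra.
      by rewrite taur -natr1 mulrDl mul1r.
    case: (ltrP 0 (b - f x)) => hs /=.
    * rewrite hr loss_lt; last lra.
      have hh : highOK k b by move=> y hy; have [h1 _] := lip y hy; lra.
      rewrite /Bad (asboolT hh) mulr0n mulr0 mul0r add0r.
      lra.
    * rewrite loss_ge; last lra.
      have [Pi1 Pi2] := Psi_init k.
      rewrite /init_cell /Psi /= in Pi1 Pi2.
      have hB := @Bad_ge0 k a b c hc.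
      case: (pselect (caseA k)) => hA.
        have := Pi2 hA. move=> hp.
 have t1 : f x - b <= L by lra.
 have t2 : 3 * L < 3 * c%:R * (L / tau0) + 3 * (L / tau0) by lra.
 have t3 : 0 <= 12 * (L * eta) by lra.
 lra.
      have hS : ~ strictH k b by move=> h; have := h x hx; lra.
      have := @Bad_ge_strict k a b c hc hA hS.
      lra.
  +
    have hc1 : c.+1%:R <= tau0 by rewrite leNgt hchk.
    case: (ltrP 0 (a - f x)) => hs /=.
    * rewrite loss_lt; last lra.
      have [Pi1 _] := Psi_init k.
      rewrite /init_cell /Psi /= in Pi1.
      have hL : ~ lowOK k a by move=> h; have := h x hx; lra.
      have := @Bad_ge_low k a b c hc hL.
      lra.
    * rewrite hr loss_ge; last lra.
      rewrite /Bad -natr1.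
      case: (asboolP (highOK k b)) => hh.
        have := hh x hx.
        move: hr; rewrite readyE => hr.
        lra.
      lra.
-
  have c0 := hc0 (negbT hr); subst c.
  move: (hr); rewrite readyE => /negbT; rewrite -leNgt => hlen.
  rewrite -/s -/u.
  set q := (a + b) / 2.
  have q0 : 0 <= q by rewrite /q; lra.
  have qL : q <= L by rewrite /q; lra.
  have hlossL : pricing_loss q (f x) <= L by apply: loss_le.
  have hB0 := @Bad_ge0 k a b 0%N hc.
  have hG0 := G_ge0 (b - a).
  case hAB: (`[< caseA k >] && (b == L)).
  + move: (hAB) => /andP[/asboolP hA /eqP hbL].
    have hv := hA x hx.
    have hs : (0 < q - f x) = false by apply/negbTE; rewrite -leNgt; rewrite /q; lra.
    rewrite hs /= loss_ge; last lra.
    rewrite /Base hAB.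
    have ha1 : q - u <= Num.max a (q - u) by rewrite le_max lexx orbT.
    have ha2 : a <= Num.max a (q - u) by rewrite le_max lexx.
    have hBad : Bad k (Num.max a (q - u)) b 0 <= Bad k a b 0.
      apply: Bad_mono => // h y hy.
      rewrite ge_max h //=; have [_ h2] := lip y hy; lra.
    case: ifP => _.
      rewrite mulr0n mulr0 mul0r. rewrite /q in ha1 *; lra.
    rewrite /q in ha1 *; lra.
  + have hBase : Base k a b = L * (G (b - a) + 1) by rewrite /Base hAB.
    rewrite hBase.
    have hAB' : forall b', b' <= b -> (`[< caseA k >] && (b' == L)) = false.
      move=> b' hb'; case: (asboolP (caseA k)) hAB => //= _ /negbT hbL.
      apply/negbTE; move: hbL; apply: contra => /eqP e; apply/eqP; lra.
    case hs: (0 < q - f x) => /=.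
    * rewrite (max_l a0).
      have hBad : Bad k a (Num.min b (q + u)) 0 <= Bad k a b 0.
        apply: Bad_mono => // h y hy.
        - rewrite -ltrBlDr lt_min; apply/andP; split; first by rewrite ltrBlDr; apply: h.
          have [h1 _] := lip y hy; lra.
        - rewrite lt_min h //=; have [h1 _] := lip y hy; lra.
      have hb1 : Num.min b (q + u) <= b by rewrite ge_min lexx.
      have hb2 : Num.min b (q + u) <= q + u by rewrite ge_min lexx orbT.
      case: ifP => _.
        rewrite mulr0n mulr0 mul0r. 
        have : 0 <= L * G (b - a) by apply: mulr_ge0 => //; lra.
        lra.
      rewrite /Base hAB' //.
      have hGs : G (Num.min b (q + u) - a) + 1 <= G (b - a) by apply: G_step => //; rewrite /q in hb2 *; lra.
      have : L * (G (Num.min b (q + u) - a) + 1) <= L * G (b - a) by rewrite ler_pM2l.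
      lra.
    * have hBad : Bad k (Num.max a (q - u)) b 0 <= Bad k a b 0.
        apply: Bad_mono => // h y hy.
        rewrite ge_max h //=; have [_ h2] := lip y hy.
        move: hs => /negbT; rewrite -leNgt; lra.
      have ha1 : q - u <= Num.max a (q - u) by rewrite le_max lexx orbT.
      have ha2 : a <= Num.max a (q - u) by rewrite le_max lexx.
      case: ifP => _.
        rewrite mulr0n mulr0 mul0r. 
        have : 0 <= L * G (b - a) by apply: mulr_ge0 => //; lra.
        lra.
      rewrite /Base hAB' //.
      have hGs : G (b - Num.max a (q - u)) + 1 <= G (b - a) by apply: G_step => //; rewrite /q in ha1 *; lra.
      have : L * (G (b - Num.max a (q - u)) + 1) <= L * G (b - a) by rewrite ler_pM2l.
      lra.
Qed.

Lemma step k x cs sig (corr : bool) : inv cs -> cellP k x ->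
  (corr = false -> sig = sigma (price cs - f x)) ->
  pricing_loss (price cs) (f x) + Psi k (alg_update_cell P cs sig)
  <= Psi k cs + beta + (if corr then betac else 0).
Proof.
move=> hinv hx hsig.
case: corr hsig => [_|h]; last by rewrite (h erefl) addr0; apply: step_unc.
pre.
have h1 := @Psi_le k _ (@inv_step cs sig hinv).
have h2 := @Psi_ge0 k cs hinv.
have /andP[_ vL] := f_range _ hx.1.
have h3 := @loss_le (price cs) (f x) (@price_ge0 cs hinv) vL.
have Le := Le_gt0. have r0 := r_ge0.
rewrite /beta /betac; lra.
Qed.

Definition key (g : {ffun 'I_d -> 'I_N}) : seq nat := [seq (g i : nat) | i <- enum 'I_d].

Definition Phi (S : lstate R) := \sum_(g : {ffun 'I_d -> 'I_N}) Psi (key g) (S (key g)).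

Lemma key_inj : injective key.
Proof.
move=> g1 g2 e; apply/ffunP => i; apply/val_inj.
have := congr1 (fun q => nth 0%N q i) e.
by rewrite /key !(nth_map i) -?enumT ?size_enum_ord // nth_ord_enum.
Qed.

Lemma key_cell (x : 'I_d -> R) : exists g, key g = cell_of N x.
Proof.
have H : forall t, (minn N.-1 t < N)%N by move=> t; lia.
exists [ffun i => Ordinal (H (Num.truncn (x i * N%:R)))].
by rewrite /key /cell_of; apply: eq_map => i; rewrite ffunE.
Qed.

Lemma Phi_update S (x : 'I_d -> R) sig :
  Phi (alg_update P S x sig) = Phi S - Psi (cell_of N x) (S (cell_of N x))
     + Psi (cell_of N x) (alg_update_cell P (S (cell_of N x)) sig).
Proof.
have [g0 e0] := key_cell x.
rewrite /Phi (bigD1 g0) //= [X in _ = X - _ + _](bigD1 g0) //=.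
rewrite /alg_update /= e0 eqxx.
have -> : \sum_(i | i != g0) Psi (key i)
     (if key i == cell_of N x then alg_update_cell P (S (cell_of N x)) sig else S (key i))
   = \sum_(i | i != g0) Psi (key i) (S (key i)).
  apply: eq_bigr => g hg; case: eqP => // e.
  by move: hg; rewrite -e0 in e; rewrite (@key_inj _ _ e) eqxx.
lra.
Qed.

Lemma alg_priceE S (x : 'I_d -> R) : alg_price P S x = price (S (cell_of N x)).
Proof. by rewrite /alg_price /price /=; case: (S _) => [[a b] c]. Qed.

Lemma run_bound (A : adversary R d) : (forall h, incube (adv_x A h)) -> forall t,
  (forall k, inv (g_state (run P f A t) k)) /\
  g_loss (run P f A t) + Phi (g_state (run P f A t))
    <= Phi (init_state L) + t%:R * beta + (g_ncorr (run P f A t))%:R * betac.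
Proof.
move=> hA; elim => [|t [IHi IHb]] /=.
  split; first by move=> k; exact: inv_init.
  by rewrite add0r !mul0r !addr0.
set g := run P f A t in IHi IHb *.
set x := adv_x A (g_hist g).
set S := g_state g in IHi IHb *.
have hx : cellP (cell_of N x) x by split => //; apply: hA.
set corr := adv_corrupt _ _ _ _.
set sig := (if corr then _ else _).
split.
  move=> k; rewrite /alg_update /=; case: eqP => _; last exact: IHi.
  exact: inv_step.
rewrite Phi_update.
have := @step (cell_of N x) x (S (cell_of N x)) sig corr (IHi _) hx.
rewrite -alg_priceE => /(_ _).
have hs : corr = false -> sig = sigma (alg_price P S x - f x) by rewrite /sig => ->.
move=> /(_ hs) hstep.
rewrite natrD -natr1 !mulrDl mul1r.
have : (if corr then betac else 0) = (corr : nat)%:R * betac by case: (corr) => /=; rewrite ?mul1r ?mul0r.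
lra.
Qed.

Lemma final_bound (A : adversary R d) (T C : nat) : (forall h, incube (adv_x A h)) ->
  (g_ncorr (run P f A T) <= C)%N ->
  g_loss (run P f A T) <= (N ^ d)%:R * I + T%:R * beta + C%:R * betac.
Proof.
move=> hA hC.
have [hi hb] := @run_bound A hA T.
have Phi0 : 0 <= Phi (g_state (run P f A T)) by apply: sumr_ge0 => g _; apply: Psi_ge0.
have PhiI : Phi (init_state L) <= (N ^ d)%:R * I.
  rewrite /Phi.
  apply: le_trans (_ : \sum_(g : {ffun 'I_d -> 'I_N}) I <= _).
    by apply: ler_sum => g _; have [] := Psi_init (key g).
  by rewrite sumr_const card_ffun !card_ord mulr_natl.
have [I0 _ _] := I_ge.
have betac0 : 0 <= betac.
  rewrite /betac; have : 0 <= L * tau0 by apply: mulr_ge0; [exact: ltW | exact: le_trans ler01 tau0_ge1].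
  move: (L_gt0) => ?; lra.
have : (g_ncorr (run P f A T))%:R * betac <= C%:R * betac by apply: ler_wpM2r => //; rewrite ler_nat.
lra.
Qed.

End Analysis.


Lemma params (R : realType) (d T : nat) : (1 <= d)%N -> (2 <= T)%N ->
  let y : R := T%:R `^ (d.+1%:R)^-1 in
  let X : R := T%:R `^ (d%:R / d.+1%:R) in
  [/\ 1 <= y, y <= T%:R, eta0 R d T = y^-1, T%:R * y^-1 = X & y ^+ d = X].
Proof.
move=> hd hT y X.
have T1 : 1 <= T%:R :> R by rewrite ler1n; lia.
have d1 : 0 < d.+1%:R :> R by rewrite ltr0n.
have e0 : 0 <= (d.+1%:R : R)^-1 by rewrite invr_ge0 ltW.
have e1 : (d.+1%:R : R)^-1 <= 1 by rewrite invf_le1 // ler1n.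
have y1 : 1 <= y.
  by have := @ler_powR R T%:R T1 0 (d.+1%:R^-1) e0; rewrite powRr0.
split => //.
- by rewrite /y; apply: ler1_powR.
- by rewrite /eta0 powRN.
- have hp : 0 < d%:R / d.+1%:R :> R by rewrite divr_gt0 // ltr0n.
  rewrite /X -(mulr_powRB1 (ler0n _ T) hp).
  congr (_ * _); rewrite /y -powRN; congr (_ `^ _).
  rewrite -natr1 in d1 *.
  have hne : (d%:R + 1 : R) != 0 by rewrite gt_eqF.
  by field.
- rewrite /y /X -powR_mulrn ?(le_trans ler01 y1) // -powRrM; congr (_ `^ _).
  by rewrite mulrC.
Qed.


Lemma arith_B (R : realType) (L rho X C tau0 Tt loss NI Tb Cb : R) :
  0 < L -> 1 <= rho -> 0 <= X -> 0 <= C ->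
  loss <= NI + Tb + Cb ->
  NI <= X * (4 * (L * rho)) ->
  Tb = 12 * (L * X) + 3 * (L * (Tt / tau0)) ->
  Cb <= C * (7 * L + 4 * (4 * (L * rho)) + L * tau0) ->
  loss <= 16 * (L * (rho * X)) + 3 * (L * (Tt / tau0)) + 23 * (L * (rho * C)) + L * (C * tau0).
Proof.
move=> L0 r1 X0 C0 h hN hT hC.
have f1 : L * X <= L * (rho * X).
  apply: ler_wpM2l; first exact: ltW.
  exact: ler_peMl.
have f2 : L * C <= L * (rho * C).
  apply: ler_wpM2l; first exact: ltW.
  exact: ler_peMl.
have e1 : X * (4 * (L * rho)) = 4 * (L * (rho * X)) by ring.
have e2 : C * (7 * L + 4 * (4 * (L * rho)) + L * tau0)
      = 7 * (L * C) + 16 * (L * (rho * C)) + L * (C * tau0) by ring.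
rewrite e1 in hN; rewrite e2 in hC.
lra.
Qed.

Lemma arith_1 (R : realType) (L rho X C tau0 Tt loss K lT : R) :
  0 < L -> 1 <= rho -> 0 <= X -> 0 <= C -> 1 <= tau0 -> 0 <= Tt ->
  30 * rho <= K * lT -> 3 <= K ->
  loss <= 16 * (L * (rho * X)) + 3 * (L * (Tt / tau0)) + 23 * (L * (rho * C)) + L * (C * tau0) ->
  loss <= L * K * (C * lT + X * lT + C * tau0 + Tt / tau0).
Proof.
move=> L0 r1 X0 C0 t1 T0 KlT K3 hB.
have LC0 : 0 <= L * C by apply: mulr_ge0 => //; exact: ltW.
have LX0 : 0 <= L * X by apply: mulr_ge0 => //; exact: ltW.
have LrC0 : 0 <= L * (rho * C) by apply: mulr_ge0; [exact: ltW | apply: mulr_ge0 => //; lra].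
have LrX0 : 0 <= L * (rho * X) by apply: mulr_ge0; [exact: ltW | apply: mulr_ge0 => //; lra].
have g1 : L * C * (30 * rho) <= L * C * (K * lT) by apply: ler_wpM2l.
have g2 : L * X * (30 * rho) <= L * X * (K * lT) by apply: ler_wpM2l.
have Tt0 : 0 <= L * (Tt / tau0).
  apply: mulr_ge0; first exact: ltW.
  by apply: divr_ge0 => //; lra.
have Ct0 : 0 <= L * (C * tau0).
  apply: mulr_ge0; first exact: ltW.
  by apply: mulr_ge0 => //; lra.
have g3 : L * (Tt / tau0) * 3 <= L * (Tt / tau0) * K by apply: ler_wpM2l.
have g4 : L * (C * tau0) * 1 <= L * (C * tau0) * K by apply: ler_wpM2l => //; lra.
have -> : L * K * (C * lT + X * lT + C * tau0 + Tt / tau0)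
  = L * C * (K * lT) + L * X * (K * lT) + L * (C * tau0) * K + L * (Tt / tau0) * K by ring.
have e1 : L * C * (30 * rho) = 30 * (L * (rho * C)) by ring.
have e2 : L * X * (30 * rho) = 30 * (L * (rho * X)) by ring.
lra.
Qed.

Lemma arith_2 (R : realType) (L rho X C y loss K lT : R) :
  0 < L -> 1 <= rho -> 0 <= X -> 0 <= C -> 1 <= y ->
  30 * rho <= K * lT ->
  loss <= 16 * (L * (rho * X)) + 3 * (L * X) + 23 * (L * (rho * C)) + L * (C * y) ->
  loss <= L * K * lT * (X + C * y).
Proof.
move=> L0 r1 X0 C0 y1 KlT hB.
have Cy0 : 0 <= C * y by apply: mulr_ge0 => //; lra.
have g1 : L * (rho * C) <= L * (rho * (C * y)).
  apply: ler_wpM2l; first exact: ltW.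
  apply: ler_wpM2l; first lra.
  exact: ler_peMr.
have g2 : L * (C * y) <= L * (rho * (C * y)).
  apply: ler_wpM2l; first exact: ltW.
  exact: ler_peMl.
have f1 : L * X <= L * (rho * X).
  apply: ler_wpM2l; first exact: ltW.
  exact: ler_peMl.
have LrX0 : 0 <= L * (rho * X) by apply: mulr_ge0; [exact: ltW | apply: mulr_ge0 => //; lra].
have LrC0 : 0 <= L * (rho * (C * y)) by apply: mulr_ge0; [exact: ltW | apply: mulr_ge0 => //; lra].
have g3 : (L * (X + C * y)) * (30 * rho) <= (L * (X + C * y)) * (K * lT).
  apply: ler_wpM2l => //; apply: mulr_ge0; first exact: ltW.
  exact: addr_ge0.
have -> : L * K * lT * (X + C * y) = L * (X + C * y) * (K * lT) by ring.
have e : L * (X + C * y) * (30 * rho) = 30 * (L * (rho * X)) + 30 * (L * (rho * (C * y))) by ring.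
lra.
Qed.


Theorem theorem14 (R : realType) (d : nat) : (1 <= d)%N ->
  exists K : R, 0 < K /\
  forall (L : R) (T : nat) (tau0 : R) (C : nat)
         (f : ('I_d -> R) -> R) (A : adversary R d),
    0 < L -> (2 <= T)%N -> 1 <= tau0 ->
    valid_f L f ->
    (forall h, incube (adv_x A h)) ->
    (g_ncorr (run (alg3 d T L tau0) f A T) <= C)%N ->
    let loss := g_loss (run (alg3 d T L tau0) f A T) in
    let Tr : R := T%:R in
    loss <= L * K * (C%:R * ln Tr + Tr `^ (d%:R / (d.+1)%:R) * ln Tr
                     + C%:R * tau0 + Tr / tau0)
    /\ (tau0 = Tr `^ ((d.+1)%:R^-1) ->
        loss <= L * K * ln Tr * (Tr `^ (d%:R / (d.+1)%:R)
                                 + C%:R * Tr `^ ((d.+1)%:R^-1))).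
Proof.
move=> hd.
have l2 : 0 < ln (2 : R) by apply: ln_gt0; lra.
exists (30 / ln 2 + 3); split.
  have : 0 < 30 / ln (2 : R) by rewrite divr_gt0.
  lra.
move=> L T tau0 C f A L0 hT tau1 hf hA hC.
cbv zeta.
have [y1 yT eE TyX yX] := @params R d T hd hT.
set y := T%:R `^ (d.+1%:R)^-1 in y1 yT eE TyX yX *.
set X := T%:R `^ (d%:R / d.+1%:R) in TyX yX *.
set N := ncells R d T.
have N1 : (0 < N)%N by rewrite /N /ncells -/y truncn_gt0.
have y0 : 0 < y by lra.
have Ny : N%:R <= y by rewrite /N /ncells -/y truncn_le; lra.
have yN : y < N%:R + 1 by rewrite /N /ncells -/y natr1 truncnS_gt.
have N1R : 1 <= N%:R :> R by rewrite ler1n.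
have hs : side R N <= 2 * eta0 R d T.
  rewrite eE /side.
  have : N%:R^-1 <= (y / 2)^-1 :> R.
    rewrite lef_pV2 ?posrE ?divr_gt0 ?ltr0n //; lra.
  by rewrite invf_div.
have eta_pos : 0 < eta0 R d T by rewrite eE invr_gt0.
have hb := @final_bound R d L (eta0 R d T) tau0 N f L0 eta_pos N1 hs tau1 hf A T C hA hC.
rewrite /alg3 -/N.
move: hb; set loss := g_loss _ => hb.
set lT := ln (T%:R : R).
have T2 : 2 <= T%:R :> R by rewrite ler_nat.
have lT2 : ln 2 <= lT by rewrite /lT ler_ln ?posrE //; lra.
have lNT : ln (N%:R : R) <= lT by rewrite /lT ler_ln ?posrE //; lra.
set rho := lT / ln 2.
have rho1 : 1 <= rho by rewrite /rho ler_pdivlMr // mul1r.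
have hG : G R L N L <= rho.
  apply: le_trans (@G_L R L N L0 N1) _.
  by rewrite /rho ler_pM2r ?invr_gt0.
have hG0 := @G_ge0 R L N L0 N1 L.
have hI : I R L N <= 4 * (L * rho).
  rewrite /I; have : L * (G R L N L + 3) <= L * (rho + 3) by rewrite ler_pM2l // lerD2r.
  have : L <= L * rho by rewrite ler_peMr //; lra.
  lra.
have hNX : ((N ^ d)%N%:R : R) <= X.
  rewrite natrX -yX; apply: lerXn2r => //; rewrite nnegrE; lra.
have I0 : 0 <= I R L N by rewrite /I; apply: mulr_ge0; lra.
have Lr0 : 0 <= L * rho by apply: mulr_ge0; lra.
have h1 : ((N ^ d)%N%:R : R) * I R L N <= X * (4 * (L * rho)).
  by apply: ler_pM => //; apply: ler0n.
have h2 : T%:R * beta R L (eta0 R d T) tau0 = 12 * (L * X) + 3 * (L * (T%:R / tau0)).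
  rewrite /beta eE -TyX; ring.
have C0 : 0 <= C%:R :> R by apply: ler0n.
have h3 : C%:R * betac R L tau0 N <= C%:R * (7 * L + 4 * (4 * (L * rho)) + L * tau0).
  rewrite /betac; apply: ler_wpM2l => //; lra.
have X0 : 0 <= X by rewrite /X powR_ge0.
have hB := @arith_B R L rho X C%:R tau0 T%:R _ _ _ _ L0 rho1 X0 C0 hb h1 h2 h3.
have KlT : 30 * rho <= (30 / ln 2 + 3) * lT.
  have lT0 : 0 <= lT by apply: le_trans (ltW l2) lT2.
  have -> : (30 / ln 2 + 3) * lT = 30 * rho + 3 * lT by rewrite /rho; ring.
  by rewrite lerDl mulr_ge0.
have K3 : 3 <= 30 / ln 2 + 3 :> R by rewrite lerDr divr_ge0 // ltW.
split.
  apply: arith_1 hB => //; try exact: ltW; try exact: ler0n.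
move=> htau.
rewrite htau -/y in hB.
have TX : T%:R / y = X by rewrite -TyX.
rewrite TX in hB.
exact: arith_2 hB.
Qed.
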